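(* Let $p$ be a complex polynomial of degree at least two. Then every zero of $p'$ belongs to $H_p = \operatorname{conv} J_p$.
   Context: For a polynomial $p$ viewed as a holomorphic self-map of the Riemann sphere $\widehat{\mathbb{C}}$ (with $p(\infty)=\infty$), the Fatou set $F_p$ is the maximal open subset of $\widehat{\mathbb{C}}$ on which the iterates $\{p^{\circ n}\}_{n\in\mathbb{N}}$ form an equicontinuous family, and the Julia set $J_p$ is the complement $\widehat{\mathbb{C}}\setminus F_p$; for polynomials $J_p$ is a nonempty compact subset of $\mathbb{C}$. $\operatorname{conv} X$ denotes the convex hull of $X \subset \mathbb{C}\cong\mathbb{R}^2$. *)

(* Defs.v *)
From mathcomp Require Import all_boot all_order all_algebra.
From mathcomp Require Import complex.
From mathcomp Require Import reals.
Set Implicit Arguments. Unset Strict Implicit. Unset Printing Implicit Defensive.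
Import Order.TTheory GRing.Theory Num.Theory.
Local Open Scope ring_scope.
Local Open Scope complex_scope.
Local Open Scope ring_scope.

(* The complex plane is R[i] for a real field R : realType.
   The Riemann sphere is option R[i], with None standing for infinity. *)
Section Dyn.
Variable R : realType.
Local Notation C := (R[i]).

Definition sphere := option C.

Definition modsq (z : C) : R := (complex.Re z) ^+ 2 + (complex.Im z) ^+ 2.

Definition chordal (x y : sphere) : R :=
  match x, y with
  | Some z, Some w => 2 * Num.sqrt (modsq (z - w)) /
                      Num.sqrt ((1 + modsq z) * (1 + modsq w))
  | Some z, None | None, Some z => 2 / Num.sqrt (1 + modsq z)
  | None, None => 0
  end.

Definition poly_sphere (p : {poly C}) (x : sphere) : sphere :=
  match x with Some z => Some p.[z] | None => None end.

Definition iterate (p : {poly C}) (n : nat) : sphere -> sphere :=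
  iter n (poly_sphere p).

Definition sphere_open (U : sphere -> Prop) : Prop :=
  forall x, U x -> exists2 r : R, 0 < r & forall y, chordal x y < r -> U y.

Definition equicontinuous_at (p : {poly C}) (x : sphere) : Prop :=
  forall eps : R, 0 < eps -> exists2 delta : R, 0 < delta &
    forall (n : nat) (y : sphere), chordal x y < delta ->
      chordal (iterate p n x) (iterate p n y) < eps.

Definition fatou (p : {poly C}) (x : sphere) : Prop :=
  exists U : sphere -> Prop, [/\ sphere_open U, U x &
    forall y, U y -> equicontinuous_at p y].

Definition julia (p : {poly C}) (x : sphere) : Prop := ~ fatou p x.

(* Julia set as a subset of C (for polynomials infinity is in the Fatou set) *)
Definition julia_C (p : {poly C}) (z : C) : Prop := julia p (Some z).

Definition conv (X : C -> Prop) (z : C) : Prop :=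
  exists (n : nat) (w : 'I_n -> R) (x : 'I_n -> C),
    [/\ forall i, 0 <= w i, \sum_(i < n) w i = 1, forall i, X (x i) &
        z = \sum_(i < n) (w i)%:C%C * x i].

End Dyn.

(* Main.v *)
Require Import Defs.
From mathcomp Require Import all_boot all_order all_algebra.
From mathcomp Require Import complex.
From mathcomp Require Import boolp classical_sets reals.
From mathcomp Require Import ring lra.
Import Order.TTheory GRing.Theory Num.Theory.
Local Open Scope ring_scope. Local Open Scope complex_scope.

Section Norm.
Context {R : realType}.
Local Notation C := (R[i]).
Definition nr (z : C) : R := Num.sqrt (modsq z).

Lemma nrE (z : C) : `|z| = (nr z)%:C.
Proof. by case: z => a b; rewrite /nr /modsq normc_def. Qed.

Lemma Cinj (a b : R) : a%:C = b%:C -> a = b.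
Proof. by move/(congr1 (@complex.Re R)). Qed.

Lemma nr_ge0 z : 0 <= nr z. Proof. exact: sqrtr_ge0. Qed.

Lemma nrM x y : nr (x * y) = nr x * nr y.
Proof. by apply: Cinj; rewrite rmorphM /= -!nrE normrM. Qed.

Lemma nrD x y : nr (x + y) <= nr x + nr y.
Proof. by rewrite -lecR rmorphD /= -!nrE ler_normD. Qed.

Lemma nrN x : nr (- x) = nr x.
Proof. by apply: Cinj; rewrite -!nrE normrN. Qed.

Lemma nr_eq0 x : (nr x == 0) = (x == 0).
Proof. apply/eqP/eqP => [h|->]; last by apply: Cinj; rewrite -nrE normr0. by apply/eqP; rewrite -normr_eq0 nrE h. Qed.

Lemma nrB x y : nr x - nr y <= nr (x - y).
Proof. have := nrD (x - y) y; rewrite subrK; lra. Qed.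

Lemma nr_real (a : R) : nr a%:C = `|a|.
Proof. by apply: Cinj; rewrite -nrE normc_def /= expr0n /= addr0 sqrtr_sqr. Qed.

Lemma nr1 : nr 1 = 1.
Proof. by have := nr_real 1; rewrite normr1. Qed.

Lemma nr_prod (s : seq C) (F : C -> C) :
  nr (\prod_(r <- s) F r) = \prod_(r <- s) nr (F r).
Proof.
elim: s => [|a s IH]; first by rewrite !big_nil nr1.
by rewrite !big_cons nrM IH.
Qed.

Lemma modsqE z : modsq z = nr z ^+ 2.
Proof. by rewrite /nr sqr_sqrtr // /modsq addr_ge0 // sqr_ge0. Qed.

Lemma sqrt_le (u v : R) : 0 <= v -> u <= v ^+ 2 -> Num.sqrt u <= v.
Proof.
move=> v0 uv; rewrite -(ger0_norm v0) -sqrtr_sqr.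
by rewrite ler_sqrt // sqr_ge0.
Qed.

Lemma chordal_up (w y : C) : chordal (Some w) (Some y) <= 2 * nr (w - y).
Proof.
rewrite /chordal -/(nr (w - y)).
set D := Num.sqrt _.
have D1 : 1 <= D.
  have mw : 0 <= modsq w by rewrite modsqE sqr_ge0.
  have my : 0 <= modsq y by rewrite modsqE sqr_ge0.
  rewrite /D -{1}sqrtr1 ler_sqrt; first nra.
  apply: mulr_ge0; lra.
have := nr_ge0 (w - y) => h.
rewrite ler_pdivrMr; last lra.
nra.
Qed.

Lemma chordal_low (a b : C) (M : R) : 1 <= M -> nr a <= M -> 2 * M <= nr b ->
  1 / (2 * (1 + M)) <= chordal (Some a) (Some b).
Proof.
move=> M1 haM hbM.
rewrite /chordal -/(nr (a - b)) sqrtrM; last by rewrite addr_ge0 // modsqE sqr_ge0.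
set sa := Num.sqrt _; set sb := Num.sqrt _.
have hsa : sa <= 1 + M.
  apply: sqrt_le; first lra.
  rewrite modsqE; have := nr_ge0 a; nra.
have hsb : sb <= 2 * nr b.
  apply: sqrt_le; first lra.
  rewrite modsqE; nra.
have sa0 : 0 < sa.
  rewrite sqrtr_gt0 modsqE; have := sqr_ge0 (nr a); lra.
have sb0 : 0 < sb.
  rewrite sqrtr_gt0 modsqE; have := sqr_ge0 (nr b); lra.
have hab : nr b - M <= nr (a - b).
  by have := nrB b a; rewrite -[b - a]opprB nrN; lra.
have P : sa * sb <= (1 + M) * (2 * nr b).
  by apply: ler_pM => //; lra.
rewrite ler_pdivlMr ?mulr_gt0 //.
have k0 : 0 < 1 / (2 * (1 + M)) by rewrite divr_gt0 //; lra.
have := ler_wpM2l (ltW k0) P.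
have -> : 1 / (2 * (1 + M)) * ((1 + M) * (2 * nr b)) = nr b.
  by field; lra.
lra.
Qed.

End Norm.

Section Poly.
Variable R : realType.
Local Notation C := (R[i]).
Variable p : {poly C}.
Hypothesis hp : (2 < size p)%N.

Lemma lc_neq0 : lead_coef p != 0.
Proof. by rewrite lead_coef_eq0 -size_poly_eq0; case: (size p) hp. Qed.

Lemma factor (c : C) : exists rs : seq C,
  p - c%:P = lead_coef p *: \prod_(r <- rs) ('X - r%:P) /\ size rs = (size p).-1.
Proof.
have [rs e] := closed_field_poly_normal (p - c%:P).
have hs : (size (- c%:P) < size p)%N.
  by rewrite size_polyN (leq_ltn_trans (size_polyC_leq1 _)) // ltnW.
have hl : lead_coef (p - c%:P) = lead_coef p by rewrite lead_coefDl.
exists rs; split; first by rewrite {1}e hl.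
have := congr1 (fun q : {poly C} => size q) e; rewrite /= size_polyDl // size_scale ?hl ?lc_neq0 //.
by rewrite size_prod_XsubC => ->.
Qed.

Lemma prod_ge (s : seq C) (f : C -> R) (h : R) : 0 <= h ->
  (forall r, r \in s -> h <= f r) -> h ^+ size s <= \prod_(r <- s) f r.
Proof.
move=> h0; elim: s => [|a s IH] H; first by rewrite big_nil expr0.
rewrite big_cons exprS /=; apply: ler_pM => //.
- by rewrite exprn_ge0.
- by apply: H; rewrite inE eqxx.
- by apply: IH => r rs; apply: H; rewrite inE rs orbT.
Qed.

Lemma seq_bound (s : seq C) : exists B : R, 0 <= B /\ forall r, r \in s -> nr r <= B.
Proof.
elim: s => [|a s [B [B0 HB]]]; first by exists 0; split.
exists (nr a + B); split; first by rewrite addr_ge0 // nr_ge0.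
move=> r; rewrite inE => /orP[/eqP->|/HB]; first by rewrite lerDl.
by have := nr_ge0 a; lra.
Qed.

Lemma eval_factor (c : C) rs : p - c%:P = lead_coef p *: \prod_(r <- rs) ('X - r%:P) ->
  forall z, p.[z] - c = lead_coef p * \prod_(r <- rs) (z - r).
Proof.
move=> e z; have := congr1 (fun q => q.[z]) e => /=.
rewrite hornerD hornerN hornerC => ->.
by rewrite hornerZ horner_prod; congr (_ * _); apply: eq_bigr => r _; rewrite hornerXsubC.
Qed.

Lemma escape_radius : exists M : R, 1 <= M /\
  forall z, M <= nr z -> 2 * nr z <= nr p.[z].
Proof.
have [rs [e hs]] := factor 0.
have [B [B0 HB]] := seq_bound rs.
set na := nr (lead_coef p).
have na0 : 0 < na by rewrite lt_def nr_eq0 lc_neq0 nr_ge0.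
exists (2 + 2 * B + 8 / na); split.
  have : 0 <= 8 / na by rewrite divr_ge0 // ltW.
  lra.
move=> z hz.
have hz8 : 8 <= na * nr z.
  have : 8 / na <= nr z by have := B0; lra.
  move=> h; have := ler_wpM2l (ltW na0) h.
  by rewrite mulrCA divff ?mulr1 // gt_eqF.
have := @eval_factor 0 rs e z; rewrite subr0 => ->.
rewrite nrM nr_prod -/na.
have hpr : (nr z / 2) ^+ 2 <= \prod_(r <- rs) nr (z - r).
  apply: (@le_trans _ _ ((nr z / 2) ^+ size rs)).
    rewrite hs; have : (2 <= (size p).-1)%N by case: (size p) hp.
    move=> h2; rewrite -(subnKC h2) exprD ler_peMr ?exprn_ge0 //.
      by rewrite divr_ge0 ?nr_ge0.
    rewrite exprn_ege1 //.
    have : 0 <= 8 / na by rewrite divr_ge0 // ltW.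
    lra.
  apply: prod_ge; first by rewrite divr_ge0 ?nr_ge0.
  move=> r /HB hr; have := nrB z r.
  have : 0 <= 8 / na by rewrite divr_ge0 // ltW.
  lra.
have := ler_wpM2l (ltW na0) hpr.
suff : 2 * nr z <= na * (nr z / 2) ^+ 2 by lra.
have := nr_ge0 z; nra.
Qed.

Lemma root_near (c w : C) (rho : R) : 0 < rho ->
  nr (p.[w] - c) < nr (lead_coef p) * rho ^+ (size p).-1 ->
  exists r, p.[r] = c /\ nr (r - w) < rho.
Proof.
move=> rho0 hlt.
have [rs [e hs]] := factor c.
case: (pselect (exists r, r \in rs /\ nr (r - w) < rho)).
  case=> r [rin hr]; exists r; split => //.
  have := @eval_factor c rs e r; rewrite (big_rem r) //= subrr mul0r mulr0.
  by move/eqP; rewrite subr_eq0 => /eqP.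
move=> H; exfalso.
have hge : rho ^+ size rs <= \prod_(r <- rs) nr (w - r).
  apply: prod_ge; first exact: ltW.
  move=> r rin; rewrite leNgt; apply/negP => hr; apply: H; exists r; split => //.
  by rewrite -nrN opprB.
move: hlt; rewrite (@eval_factor c rs e w) nrM nr_prod -hs.
have na0 : 0 < nr (lead_coef p) by rewrite lt_def nr_eq0 lc_neq0 nr_ge0.
have := ler_wpM2l (ltW na0) hge; lra.
Qed.

Lemma lip (q : {poly C}) (w : C) : exists L : R, 0 < L /\
  forall z, nr (z - w) <= 1 -> nr (q.[z] - q.[w]) <= L * nr (z - w).
Proof.
elim/poly_ind: q => [|q c [L [L0 HL]]].
  exists 1; split => // z _; rewrite !horner0 subrr.
  have -> : nr (0 : C) = 0 by apply/eqP; rewrite nr_eq0.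
  by rewrite mul1r nr_ge0.
exists (L * (nr w + 1) + nr q.[w] + 1); split.
  have := nr_ge0 w; have := nr_ge0 q.[w]; nra.
move=> z hz; rewrite !hornerMXaddC.
have -> : q.[z] * z + c - (q.[w] * w + c) = (q.[z] - q.[w]) * z + q.[w] * (z - w) by ring.
apply: (le_trans (nrD _ _)); rewrite !nrM.
have h1 := HL z hz.
have h2 : nr z <= nr w + 1 by have := nrD (z - w) w; rewrite subrK; lra.
have := nr_ge0 z; have := nr_ge0 (z - w); have := nr_ge0 q.[w];
have := nr_ge0 (q.[z] - q.[w]); have := nr_ge0 w.
nra.
Qed.

Lemma cont_horner (w : C) (eps : R) : 0 < eps -> exists2 d : R, 0 < d &
  forall z, nr (z - w) < d -> nr (p.[z] - p.[w]) < eps.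
Proof.
move=> e0; have [L [L0 HL]] := lip p w.
exists (Num.min 1 (eps / L)); first by rewrite lt_min ltr01 divr_gt0.
move=> z; rewrite lt_min => /andP[h1 h2].
apply: (le_lt_trans (HL z (ltW h1))).
have : L * nr (z - w) < L * (eps / L) by rewrite ltr_pM2l.
by rewrite mulrCA divff ?mulr1 // gt_eqF.
Qed.

Definition it (n : nat) (z : C) := iter n (horner p) z.

Lemma cont_it n (w : C) (eps : R) : 0 < eps -> exists2 d : R, 0 < d &
  forall z, nr (z - w) < d -> nr (it n z - it n w) < eps.
Proof.
elim: n eps => [|n IH] eps e0; first by exists eps.
have [d1 d10 H1] := @cont_horner (it n w) eps e0.
have [d d0 H] := IH d1 d10.
by exists d => // z hz; rewrite /it !iterS; apply: H1; apply: H.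
Qed.

Lemma iterate_Some n z : iterate p n (Some z) = Some (it n z).
Proof. by elim: n => //= n; rewrite /iterate => ->. Qed.

Variable M : R.
Hypothesis M1 : (1 : R) <= M.
Hypothesis hM : forall z, M <= nr z -> 2 * nr z <= nr p.[z].

Definition Kset z := forall n, nr (it n z) <= M.
Definition Esc z := exists n, M < nr (it n z).
Definition Bpt z := Kset z /\ forall rho : R, 0 < rho ->
  exists y, nr (y - z) < rho /\ Esc y.

Lemma notK_Esc z : ~ Kset z -> Esc z.
Proof.
move=> H; apply: contrapT => H2; apply: H => n.
rewrite leNgt; apply/negP => h; apply: H2; by exists n.
Qed.

Lemma esc_grow z n : M < nr (it n z) ->
  forall m, 2 ^+ m * nr (it n z) <= nr (it (m + n) z).
Proof.
move=> h; elim=> [|m IH]; first by rewrite expr0 mul1r.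
rewrite addSn /it iterS -/(it _ _) exprS -mulrA.
have hm : M <= nr (it (m + n) z).
  have : 1 <= 2 ^+ m :> R by rewrite exprn_ege1 //; lra.
  have := nr_ge0 (it n z); nra.
have := hM _ hm; lra.
Qed.

Lemma esc_unbounded z : Esc z -> forall B : R, exists n, B <= nr (it n z).
Proof.
case=> n hn B.
set m := Num.Def.archi_bound `|B|.
have hb : `|B| < m%:R by apply: archi_boundP.
exists (m + n)%N.
have h2 : (m%:R : R) <= 2 ^+ m.
  by rewrite -natrX ler_nat ltnW // ltn_expl.
have := @esc_grow z n hn m.
have h3 : (2 ^+ m : R) <= 2 ^+ m * nr (it n z).
  by rewrite ler_peMr ?exprn_ge0 //; apply: le_trans M1 (ltW hn).
have := ler_norm B.
lra.
Qed.

Lemma Bpt_julia z : Bpt z -> julia_C p z.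
Proof.
case=> Kz app [U [oU Uz heq]].
have e0 : 0 < 1 / (2 * (1 + M)).
  rewrite divr_gt0 //; have := M1; lra.
have [d d0 H] := heq _ Uz _ e0.
have [y [hy ey]] := app (d / 2) (divr_gt0 d0 (ltr0Sn _ 1)).
have [n hn] := @esc_unbounded y ey (2 * M).
have := H n (Some y).
rewrite !iterate_Some.
have hc : chordal (Some z) (Some y) < d.
  apply: (le_lt_trans (chordal_up _ _)).
  by rewrite -nrN opprB; lra.
move=> /(_ hc).
have := @chordal_low R (it n z) (it n y) M M1 (Kz n) hn.
lra.
Qed.

Lemma Bpt_back c w : Bpt c -> p.[w] = c -> Bpt w.
Proof.
case=> Kc app hw; split.
  case=> [|n]; last by rewrite /it iterSr -/(it _ _) hw; apply: Kc.
  rewrite /it /=; rewrite leNgt; apply/negP => h.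
  have := hM _ (ltW h); rewrite hw; have := Kc 0%N; rewrite /it /=.
  have := nr_ge0 w; lra.
move=> rho rho0.
have na0 : 0 < nr (lead_coef p) by rewrite lt_def nr_eq0 lc_neq0 nr_ge0.
have [y [hy [n ey]]] := app _ (mulr_gt0 na0 (exprn_gt0 (size p).-1 rho0)).
have hlt : nr (p.[w] - y) < nr (lead_coef p) * rho ^+ (size p).-1.
  by rewrite hw -nrN opprB.
have [r [hr hrw]] := @root_near y w rho rho0 hlt.
exists r; split => //; exists n.+1.
by rewrite /it iterSr -/(it _ _) hr.
Qed.

Lemma fixed_K : exists k, Kset k.
Proof.
have hs : size (p - 'X) != 1%N.
  rewrite size_polyDl ?size_polyN ?size_polyX //; first by case: (size p) hp => // [[|]].
have [k hk] := closed_rootP _ hs.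
have pk : p.[k] = k.
  by move: hk; rewrite /root hornerD hornerN hornerX subr_eq0 => /eqP.
have itk : forall n, it n k = k.
  by elim=> // n IH; rewrite /it iterS -/(it _ _) IH pk.
exists k => n; rewrite itk leNgt; apply/negP => h.
have := hM _ (ltW h); rewrite pk; have := M1; lra.
Qed.

Lemma Bpt_exists : exists c, Bpt c.
Proof.
have [k Kk] := fixed_K.
pose e : C := (M + 1)%:C.
pose x (t : R) : C := k + t%:C * (e - k).
pose S : set R := fun t => (0 <= t <= 1) /\ Kset (x t).
have S0 : S 0 by split; [rewrite lexx ler01 | rewrite /x mul0r addr0].
have hasS : has_sup S.
  by split; [exists 0 | exists 1 => t [/andP[_ ?] _]].
set ts := sup S.
have ts0 : 0 <= ts := sup_upper_bound hasS S0.
have ts1 : ts <= 1 by apply: ge_sup; [exists 0 | move=> t [/andP[_ ?] _]].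
set Dk := nr (e - k).
have Dk0 : 0 <= Dk := nr_ge0 _.
have xd t s : nr (x t - x s) = `|t - s| * Dk.
  have -> : x t - x s = (t - s)%:C * (e - k) by rewrite /x rmorphB /=; ring.
  by rewrite nrM nr_real.
have KS : Kset (x ts).
  apply: contrapT => nK; have [n hn] := @notK_Esc _ nK.
  have [d d0 Hd] := @cont_it n (x ts) (nr (it n (x ts)) - M) ltac:(lra).
  have e0 : 0 < d / (Dk + 1) by rewrite divr_gt0 //; lra.
  have [t St ht] := sup_adherent e0 hasS.
  have tts : t <= ts := sup_upper_bound hasS St.
  have h1 : (ts - t) * (Dk + 1) < d.
    rewrite -ltr_pdivlMr; [move: ht; rewrite -/ts; lra | lra].
  have h2 : nr (x t - x ts) < d.
    rewrite xd ler0_norm; last lra.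
    have : 0 <= (ts - t) * Dk by apply: mulr_ge0; lra.
    nra.
  have := Hd _ h2.
  have := nrB (it n (x ts)) (it n (x t)).
  rewrite -[it n (x ts) - it n (x t)]opprB nrN.
  have := St.2 n; lra.
have tslt : ts < 1.
  rewrite lt_neqAle ts1 andbT; apply/eqP => h.
  have := KS 0%N; rewrite /it /= h /x mul1r addrC subrK /e nr_real ger0_norm.
    lra.
  have := M1; lra.
exists (x ts); split => // rho rho0.
set eta := Num.min (1 - ts) (rho / (Dk + 1)).
have eta0 : 0 < eta by rewrite lt_min subr_gt0 tslt divr_gt0 //; lra.
have eta1 : eta <= 1 - ts by rewrite ge_min lexx.
have eta2 : eta <= rho / (Dk + 1) by rewrite ge_min lexx orbT.
have eta3 : eta * (Dk + 1) <= rho by rewrite -ler_pdivlMr; lra.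
exists (x (ts + eta)); split.
  rewrite xd addrAC subrr add0r ger0_norm; last lra.
  nra.
apply: (@notK_Esc (x (ts + eta))) => Kt.
have St : S (ts + eta) by split => //; apply/andP; split; lra.
have := sup_upper_bound hasS St; rewrite -/ts; lra.
Qed.

End Poly.

Section GL.
Context {R : realType}.
Local Notation C := (R[i]).

Lemma deriv_prod_eval (s : seq C) (z : C) : all (fun r => z != r) s ->
  (\prod_(r <- s) ('X - r%:P))^`().[z] =
  (\prod_(r <- s) (z - r)) * \sum_(r <- s) (z - r)^-1.
Proof.
elim: s => [|a s IH]; first by rewrite !big_nil derivC horner0 mulr0.
rewrite /= => /andP[za hs].
rewrite !big_cons derivM derivXsubC hornerD !hornerM hornerXsubC IH // hornerC.
rewrite horner_prod.
have -> : \prod_(i <- s) ('X - i%:P).[z] = \prod_(r <- s) (z - r).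
  by apply: eq_bigr => r _; rewrite hornerXsubC.
have za' : z - a != 0 by rewrite subr_eq0.
field.
exact: za'.
Qed.

Lemma sum_ord (T : zmodType) (rs : seq C) (F : C -> T) :
  \sum_(r <- rs) F r = \sum_(i < size rs) F (nth 0 rs i).
Proof. by rewrite (big_nth 0) big_mkord. Qed.

Lemma conj_inv (u : C) : u != 0 -> (u^-1)^*%C = ((nr u ^+ 2)^-1)%:C * u.
Proof.
move=> u0; rewrite conjc_inv invc_norm normcJ conjcK nrE.
by rewrite -rmorphXn -fmorphV.
Qed.

Lemma sum_pos (s : seq C) (f : C -> R) : (0 < size s)%N ->
  (forall r, r \in s -> 0 < f r) -> 0 < \sum_(r <- s) f r.
Proof.
case: s => // a s _ H; rewrite big_cons; apply: ltr_pwDl.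
  by apply: H; rewrite inE eqxx.
rewrite big_seq; apply: sumr_ge0 => r rin; apply: ltW; apply: H.
by rewrite inE rin orbT.
Qed.

End GL.

Theorem mainTheorem3 (R : realType) (p : {poly R[i]}) :
  (2 < size p)%N ->
  forall z : R[i], root p^`() z -> conv (julia_C p) z.
Proof.
move=> hp z0 hz0.
have [M [M1 hM]] := @escape_radius R p hp.
have [c Bc] := @Bpt_exists R p hp M M1 hM.
have [rs [e hs]] := @factor R p hp c.
have rootc : forall r, r \in rs -> p.[r] = c.
  move=> r rin; have := @eval_factor R p c rs e r; rewrite (big_rem r) //= subrr mul0r mulr0.
  by move/eqP; rewrite subr_eq0 => /eqP.
have Jrs : forall r, r \in rs -> julia_C p r.
  move=> r rin; apply: (@Bpt_julia R p M M1 hM).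
  exact: (@Bpt_back R p hp M hM c r Bc (rootc r rin)).
case: (boolP (z0 \in rs)) => hin.
  exists 1%N, (fun _ => 1), (fun _ => z0); split.
  - by move=> _; exact: ler01.
  - by rewrite big_ord1.
  - by move=> _; apply: Jrs.
  - by rewrite big_ord1 rmorph1 mul1r.
have hall : all (fun r => z0 != r) rs.
  apply/allP => r rin; apply/negP => /eqP h; by rewrite h rin in hin.
have hd : p^`() = lead_coef p *: (\prod_(r <- rs) ('X - r%:P))^`().
  by have := congr1 (fun q : {poly R[i]} => q^`()) e; rewrite /= derivB derivC subr0 derivZ.
move: hz0; rewrite /root hd hornerZ deriv_prod_eval //.
have hP : \prod_(r <- rs) (z0 - r) != 0.
  rewrite prodf_seq_neq0; apply/allP => r rin /=; rewrite subr_eq0.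
  by move/allP: hall => /(_ r rin).
rewrite !mulf_eq0 (negbTE (@lc_neq0 R p hp)) (negbTE hP) /= => /eqP hsum.
pose m (r : R[i]) : R := (nr (z0 - r) ^+ 2)^-1.
have hc : \sum_(r <- rs) (m r)%:C * (z0 - r) = 0.
  transitivity ((\sum_(r <- rs) (z0 - r)^-1)^*%C); last by rewrite hsum conjc0.
  rewrite (@rmorph_sum _ _ (@conjc R)).
  apply: eq_big_seq => r rin; symmetry; apply: conj_inv; rewrite subr_eq0.
  by move/allP: hall => /(_ r rin).
have mpos : forall r, r \in rs -> 0 < m r.
  move=> r rin; rewrite /m invr_gt0 exprn_gt0 // lt_def nr_ge0 andbT nr_eq0 subr_eq0.
  by move/allP: hall => /(_ r rin).
have S0 : 0 < \sum_(r <- rs) m r.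
  by apply: sum_pos => //; rewrite hs; case: (size p) hp => // [[|]].
set S := \sum_(r <- rs) m r.
have hid : S%:C * z0 = \sum_(r <- rs) (m r)%:C * r.
  move/eqP: hc; rewrite (eq_bigr (fun r => (m r)%:C * z0 - (m r)%:C * r)); last first.
    by move=> r _; rewrite mulrBr.
  rewrite sumrB subr_eq0 -mulr_suml => /eqP <-.
  by rewrite /S rmorph_sum.
exists (size rs), (fun i => m (nth 0 rs i) / S), (fun i => nth 0 rs i); split.
- move=> i; apply: divr_ge0; last exact: ltW.
  by apply: ltW; apply: mpos; exact: mem_nth.
- by rewrite -mulr_suml -(@sum_ord R _ rs m) divff // gt_eqF.
- by move=> i; apply: Jrs; exact: mem_nth.
- rewrite -(@sum_ord R _ rs (fun r => (m r / S)%:C * r)).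
  rewrite (eq_bigr (fun r => S^-1%:C * ((m r)%:C * r))); last first.
    by move=> r _; rewrite rmorphM /= mulrA [_ * S^-1%:C]mulrC.
  rewrite -mulr_sumr -hid mulrA -rmorphM /= mulVf ?gt_eqF // mul1r.
  by [].
Qed.
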